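(* On the étale cover $\tilde U$ (see context), with the lifted Poisson bracket, one has $\{x_i,x_j\}=0$, $\{y_i,y_j\}=0$ and $\{x_i,y_j\}=\delta_{ij}y_j$ for all $1\le i,j\le d$.
   Context: Let $V=\mathbb C^d$ and let $\mathfrak a=(\mathfrak{gl}(V)\ltimes V)\oplus(\mathfrak{gl}(V)\ltimes V^* )$ with basis $e_{ij}$, $e'_{ij}$ (matrix units of the two copies of $\mathfrak{gl}(V)$), $q_i$ (basis of $V$), $p_i$ (basis of $V^*$), with the standard $\mathfrak{gl}$ brackets, $[e_{ij},q_k]=\delta_{jk}q_i$, $[e'_{ij},p_k]=-\delta_{ki}p_j$, and all other brackets of basis elements zero. Let $\mathbb C[\mathfrak Z_d]:=\big(S(\mathfrak a)/S(\mathfrak a)\mathfrak{gl}(V)_{\rm diag}\big)^{\mathfrak{gl}(V)_{\rm diag}}\cong\mathbb C[e_{ij},q_i,p_i]^{\mathfrak{gl}(V)}$, with the Poisson bracket induced from the Lie–Poisson bracket on $S(\mathfrak a)$, where $\mathfrak{gl}(V)_{\rm diag}$ is spanned by $e_{ij}+e'_{ij}$; $\mathfrak Z_d=\operatorname{Spec}\mathbb C[\mathfrak Z_d]$. Let $a_r=\operatorname{Tr}A^r$ where $A=(e_{ij})$, and $b_s=\sum p_{i_1}e_{i_1i_2}\cdots e_{i_si_{s+1}}q_{i_{s+1}}$. Let $U\subset\mathfrak Z_d$ be the open subset where $A$ has $d$ distinct eigenvalues, and $\tilde U\to U$ the étale cover given by orderings of the eigenvalues; the Poisson bracket lifts uniquely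 to $\tilde U$. On $\tilde U$ let $x_1,\dots,x_d$ be the ordered eigenvalues (so $a_r=\sum_i x_i^r$) and $y_i=\sum_{r=0}^{d-1}(-1)^r\sigma_r(x_1,\dots,\widehat{x_i},\dots,x_d)\,b_{d-1-r}$, where $\sigma_r$ is the $r$-th elementary symmetric function. *)

(* Defs.v *)
From HB Require Import structures.
From mathcomp Require Import all_boot all_order all_algebra.
From mathcomp Require Import reals complex.
Set Implicit Arguments. Unset Strict Implicit. Unset Printing Implicit Defensive.
Import Order.TTheory GRing.Theory Num.Theory.
Local Open Scope ring_scope.

(* The field of complex numbers: C = R[i] for R a model of the reals
   (any realType is isomorphic to the real numbers). *)
Definition Cplx (R : realType) := complex R.

Definition poisson_bracket (K : fieldType) (S : comUnitAlgType K)
  (br : S -> S -> S) : Prop :=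
  [/\ forall (a : K) (f g h : S), br (a *: f + g) h = a *: br f h + br g h,
      forall (a : K) (f g h : S), br h (a *: f + g) = a *: br h f + br h g,
      forall f g : S, br f g = - br g f,
      forall f g h : S, br (f * g) h = f * br g h + g * br f h
    & forall f g h : S, br f (br g h) + br g (br h f) + br h (br f g) = 0].

Definition Amat (S : comUnitRingType) (d : nat) (E : 'I_d -> 'I_d -> S)
  : 'M[S]_d := \matrix_(i, j) E i j.

(* b_s = sum p_{i1} e_{i1 i2} ... e_{is i(s+1)} q_{i(s+1)} = p^T A^s q. *)
Definition bfun (S : comUnitRingType) (d : nat) (E : 'I_d -> 'I_d -> S)
  (Q P : 'I_d -> S) (s : nat) : S :=
  \sum_(i < d) \sum_(j < d) P i * (Amat E ^+ s) i j * Q j.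

Definition esym_omit (S : comUnitRingType) (d : nat) (x : 'I_d -> S)
  (i : 'I_d) (r : nat) : S :=
  \sum_(J : {set 'I_d} | (#|J| == r) && (i \notin J)) \prod_(j in J) x j.

Definition yfun (S : comUnitRingType) (d : nat) (E : 'I_d -> 'I_d -> S)
  (Q P : 'I_d -> S) (x : 'I_d -> S) (i : 'I_d) : S :=
  \sum_(r < d) (-1) ^+ r * esym_omit x i r * bfun E Q P (d.-1 - r).

(* Main.v *)
Require Import Defs.
From HB Require Import structures.
From mathcomp Require Import all_boot all_order all_algebra.
From mathcomp Require Import reals complex.
From mathcomp Require Import zify ring.
Set Implicit Arguments. Unset Strict Implicit. Unset Printing Implicit Defensive.
Import Order.TTheory GRing.Theory Num.Theory.
Local Open Scope ring_scope.


Section Der.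
Variable (R : comNzRingType) (D : R -> R).
Hypothesis DD : forall a b, D (a + b) = D a + D b.
Hypothesis DM : forall a b, D (a * b) = D a * b + a * D b.

Lemma Der0 : D 0 = 0.
Proof. by apply: (@addrI _ (D 0)); rewrite -DD !addr0. Qed.

Lemma DerN a : D (- a) = - D a.
Proof. by apply: (@addrI _ (D a)); rewrite -DD !subrr Der0. Qed.

Lemma DerB a b : D (a - b) = D a - D b.
Proof. by rewrite DD DerN. Qed.

Lemma Der1 : D 1 = 0.
Proof.
have H := DM 1 1; rewrite !mul1r !mulr1 in H.
by apply: (@addrI _ (D 1)); rewrite addr0 -H.
Qed.

Lemma Dersum (I : Type) (s : seq I) (P : pred I) (F : I -> R) :
  D (\sum_(i <- s | P i) F i) = \sum_(i <- s | P i) D (F i).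
Proof. exact: (big_morph D DD Der0). Qed.

Lemma DersignX k : D ((-1) ^+ k) = 0.
Proof.
elim: k => [|k IH]; first by rewrite expr0 Der1.
by rewrite exprS DM IH mulr0 DerN Der1 oppr0 mul0r addr0.
Qed.

Lemma Dprod0 (I : Type) (s : seq I) (P : pred I) (F : I -> R) :
  (forall i, P i -> D (F i) = 0) -> D (\prod_(i <- s | P i) F i) = 0.
Proof.
move=> H; apply: (big_ind (fun a => D a = 0)) => //; first exact: Der1.
by move=> a b Ha Hb; rewrite DM Ha Hb mul0r mulr0 addr0.
Qed.

Lemma Dprod_seq (I : eqType) (s : seq I) (F : I -> R) : uniq s ->
  D (\prod_(i <- s) F i) =
  \sum_(j <- s) \prod_(i <- s) (if i == j then D (F i) else F i).
Proof.
elim: s => [|a s IH] /=; first by rewrite big_nil big_nil Der1.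
case/andP=> nas us; rewrite big_cons DM IH // big_cons big_cons eqxx.
congr (_ + _).
  congr (_ * _); apply: eq_big_seq => i iS; case: eqP => // eia.
  by move: nas; rewrite -eia iS.
rewrite big_distrr /=; apply: eq_big_seq => j js; rewrite big_cons.
case: eqP => // eaj; by move: nas; rewrite eaj js.
Qed.

Lemma Ddet n (M : 'M[R]_n) :
  D (\det M) = \sum_j \det (\matrix_(i, k) (if i == j then D (M i k) else M i k)).
Proof.
rewrite /determinant Dersum.
under eq_bigr => s _ do rewrite DM DersignX mul0r add0r Dprod_seq ?index_enum_uniq //.
under eq_bigr => s _ do rewrite big_distrr /=.
rewrite exchange_big /=; apply: eq_bigr => j _.
rewrite /determinant; apply: eq_bigr => s _; congr (_ * _).
by apply: eq_bigr => i _; rewrite mxE.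
Qed.

Lemma Dmx_mul m n p (M : 'M[R]_(m, n)) (N : 'M[R]_(n, p)) :
  map_mx D (M *m N) = map_mx D M *m N + M *m map_mx D N.
Proof.
apply/matrixP => i j; rewrite !mxE Dersum -big_split /=.
by apply: eq_bigr => k _; rewrite DM !mxE.
Qed.

Lemma Dmx_add m n (M N : 'M[R]_(m, n)) : map_mx D (M + N) = map_mx D M + map_mx D N.
Proof. by apply/matrixP => i j; rewrite !mxE DD. Qed.

Lemma Dmx_sub m n (M N : 'M[R]_(m, n)) : map_mx D (M - N) = map_mx D M - map_mx D N.
Proof. by apply/matrixP => i j; rewrite !mxE DerB. Qed.

Lemma Dmx_scale m n c (M : 'M[R]_(m, n)) :
  map_mx D (c *: M) = D c *: M + c *: map_mx D M.
Proof. by apply/matrixP => i j; rewrite !mxE DM. Qed.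

Lemma Dmx_sum m n (I : Type) (s : seq I) (P : pred I) (F : I -> 'M[R]_(m, n)) :
  map_mx D (\sum_(i <- s | P i) F i) = \sum_(i <- s | P i) map_mx D (F i).
Proof.
apply/matrixP => a b; rewrite !mxE summxE Dersum summxE.
by apply: eq_bigr => i _; rewrite mxE.
Qed.

Lemma Dmx_scalar n c : map_mx D (c%:M : 'M[R]_n) = (D c)%:M.
Proof. by apply/matrixP => i j; rewrite !mxE; case: (i == j); rewrite ?mulr1n ?mulr0n ?Der0. Qed.

Lemma Dmx1 n : map_mx D (1%:M : 'M[R]_n) = 0.
Proof. by rewrite Dmx_scalar Der1; apply/matrixP => i j; rewrite !mxE mul0rn. Qed.

End Der.


Section Eigen.
Variable (S : comUnitRingType) (n : nat) (A : 'M[S]_n.+1) (x : 'I_n.+1 -> S).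
Hypothesis Hchar : char_poly A = \prod_(i < n.+1) ('X - (x i)%:P).
Hypothesis Hunit : forall i j, i != j -> (x i - x j) \is a GRing.unit.

Definition Lp i : {poly S} := \prod_(k < n.+1 | k != i) ('X - (x k)%:P).
Definition uu i : S := \prod_(k < n.+1 | k != i) (x i - x k).
Definition Lm i := horner_mx A (Lp i).
Fact Pm_key : unit. Proof. exact: tt. Qed.
Definition Pm i := locked_with Pm_key ((uu i)^-1 *: Lm i).
Lemma PmE i : Pm i = (uu i)^-1 *: Lm i. Proof. by rewrite /Pm unlock. Qed.

Lemma uu_unit i : uu i \is a GRing.unit.
Proof. by apply: unitr_prod => k ki; apply: Hunit; rewrite eq_sym. Qed.

Lemma hornerLp i k : (Lp i).[x k] = if k == i then uu i else 0.
Proof.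
rewrite horner_prod; case: eqP => [->|/eqP ki].
  by apply: eq_bigr => l _; rewrite hornerXsubC.
by rewrite (bigD1 k) //= hornerXsubC subrr mul0r.
Qed.

Lemma charP i : char_poly A = ('X - (x i)%:P) * Lp i.
Proof. by rewrite Hchar (bigD1 i). Qed.

Lemma horner_XsubC_mx c : horner_mx A ('X - c%:P) = A - c%:M.
Proof. by rewrite rmorphB /= horner_mx_X horner_mx_C. Qed.

Lemma ALm i : A *m Lm i = x i *: Lm i.
Proof.
have := Cayley_Hamilton A; rewrite (charP i) rmorphM /= horner_XsubC_mx.
by rewrite -mulmxE mulmxBl mul_scalar_mx => /eqP; rewrite subr_eq0 => /eqP.
Qed.

Lemma horner_mx_comm p q : horner_mx A p *m horner_mx A q = horner_mx A q *m horner_mx A p.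
Proof. by rewrite !mulmxE -!rmorphM /= mulrC. Qed.

Lemma LmA i : Lm i *m A = x i *: Lm i.
Proof. by have := horner_mx_comm (Lp i) 'X; rewrite horner_mx_X /Lm => ->; exact: ALm. Qed.

Lemma hornerLm f i : horner_mx A f *m Lm i = f.[x i] *: Lm i.
Proof.
elim/poly_ind: f => [|f c IH]; first by rewrite rmorph0 mul0mx horner0 scale0r.
rewrite rmorphD rmorphM /= horner_mx_X horner_mx_C mulmxDl -mulmxE -mulmxA ALm.
rewrite -scalemxAr IH scalerA mul_scalar_mx hornerD hornerMX hornerC scalerDl.
by rewrite mulrC.
Qed.

Lemma LmLm k i : Lm k *m Lm i = (if i == k then uu k else 0) *: Lm i.
Proof. by rewrite hornerLm hornerLp; case: eqP => // ->. Qed.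

Lemma PmPm k i : Pm k *m Pm i = if k == i then Pm i else 0.
Proof.
rewrite !PmE -scalemxAl -scalemxAr LmLm scalerA eq_sym; case: eqP => [->|_].
  by rewrite scalerA mulrC mulrA mulrV ?uu_unit // mul1r.
by rewrite scale0r scaler0.
Qed.

Lemma APm i : A *m Pm i = x i *: Pm i.
Proof. by rewrite !PmE -scalemxAr ALm !scalerA mulrC. Qed.

Lemma PmA i : Pm i *m A = x i *: Pm i.
Proof. by rewrite !PmE -scalemxAl LmA !scalerA mulrC. Qed.

Lemma size_Lp i : size (Lp i) = n.+1.
Proof.
have : size (char_poly A) = n.+2 by rewrite size_char_poly.
rewrite (charP i) mulrC size_Mmonic ?monicXsubC ?size_XsubC //.
  by rewrite addnC => -[].
by apply: monic_neq0; rewrite monic_prod // => k _; rewrite monicXsubC.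
Qed.

Lemma uniq_roots_map (s : seq 'I_n.+1) : uniq s -> uniq_roots [seq x k | k <- s].
Proof.
elim: s => [|a s IH] //= /andP[nas us]; rewrite IH // andbT.
apply/allP => _ /mapP[b bs ->]; rewrite /diff_roots mulrC eqxx /=.
by apply: Hunit; apply: contraNneq nas => <-.
Qed.

Lemma sumLp : \sum_i (uu i)^-1 *: Lp i = 1.
Proof.
apply/eqP; rewrite -subr_eq0; apply/eqP; set h := _ - 1.
apply: contraTeq (uniq_roots_map (enum_uniq 'I_n.+1)) => hn0.
have : all (root h) [seq x k | k <- enum 'I_n.+1].
  apply/allP => _ /mapP[k _ ->]; rewrite /root /h hornerD hornerN hornerC.
  rewrite horner_sum (bigD1 k) //= big1 ?addr0.
    by rewrite hornerZ hornerLp eqxx mulVr ?uu_unit // subrr.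
  by move=> i ik; rewrite hornerZ hornerLp eq_sym (negbTE ik) mulr0.
move=> hr; apply/negP => ur; have := max_ring_poly_roots hn0 hr ur.
rewrite size_map size_enum_ord; apply/negP; rewrite -leqNgt.
apply: leq_trans (size_polyD _ _) _; rewrite size_polyN size_poly1 geq_max.
rewrite andbT; apply: (big_ind (fun p : {poly S} => size p <= n.+1)%N) => //.
  by rewrite size_poly0.
  by move=> p q hp hq; apply: leq_trans (size_polyD _ _) _; rewrite geq_max hp hq.
by move=> i _; apply: leq_trans (size_scale_leq _ _) _; rewrite size_Lp.
Qed.

Lemma sumPm : \sum_i Pm i = 1%:M.
Proof.
have := congr1 (horner_mx A) sumLp; rewrite rmorph_sum rmorph1 /=.
move=> H; rewrite -[1%:M]/(1 : 'M_n.+1) -H.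
by apply: eq_bigr => i _; rewrite !PmE /Lm horner_mxZ.
Qed.


Lemma deriv_char : (char_poly A)^`() = \tr (\adj (char_poly_mx A)).
Proof.
rewrite /char_poly (Ddet (@derivD S) (@derivM S)); apply: eq_bigr => j _.
set T := char_poly_mx A.
rewrite (expand_det_row _ j) (bigD1 j) //= big1 ?addr0; last first.
  move=> k kj; rewrite mxE eqxx /T !mxE derivB derivMn derivX derivC subr0.
  by rewrite eq_sym (negbTE kj) mulr0n mul0r.
rewrite mxE eqxx /T !mxE derivB derivMn derivX derivC subr0 eqxx mulr1n mul1r.
rewrite /cofactor; congr (_ * \det _); apply/matrixP => a b.
by rewrite !mxE eq_sym (negbTE (neq_lift _ _)).
Qed.

Lemma adjP k : \adj (char_poly_mx A) *m (map_mx polyC (Pm k)) = Lp k *: (map_mx polyC (Pm k)).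
Proof.
set T := char_poly_mx A; set PP := map_mx polyC (Pm k).
have TP : T *m PP = ('X - (x k)%:P) *: PP.
  rewrite /T /char_poly_mx mulmxBl mul_scalar_mx -map_mxM APm map_mxZ /=.
  by rewrite scalerBl.
have : ('X - (x k)%:P) *: (\adj T *m PP - Lp k *: PP) = 0.
  rewrite scalerBr scalerA -(charP k) scalemxAr -TP mulmxA mul_adj_mx.
  by rewrite mul_scalar_mx subrr.
move=> H; apply/eqP; rewrite -subr_eq0; apply/eqP/matrixP => a b.
have := congr1 (fun M : 'M_n.+1 => M a b) H; rewrite !mxE => E.
apply: (monic_lreg (monicXsubC (x k))); by rewrite E mulr0.
Qed.

Lemma tr_adj : \tr (\adj (char_poly_mx A)) = \sum_k Lp k * (\tr (Pm k))%:P.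
Proof.
have E1 : (1%:M : 'M[{poly S}]_n.+1) = \sum_i map_mx polyC (Pm i).
  rewrite -(map_mx1 polyC) -sumPm; apply/matrixP=> a b.
  rewrite mxE !summxE rmorph_sum; apply: eq_bigr => i _; by rewrite [RHS]mxE.
rewrite -[\adj _]mulmx1 E1 mulmx_sumr raddf_sum; apply: eq_bigr => k _.
by rewrite adjP /= [LHS]mxtraceZ trace_map_mx.
Qed.

Lemma trPm i : \tr (Pm i) = 1.
Proof.
have := congr1 (horner_eval (x i)) (etrans deriv_char tr_adj).
rewrite /horner_eval (charP i) derivM derivXsubC mul1r hornerD hornerM.
rewrite hornerXsubC subrr mul0r addr0 horner_sum (bigD1 i) //= big1 ?addr0.
  rewrite hornerM hornerC hornerLp eqxx => E.
  by apply: (mulrI (uu_unit i)); rewrite mulr1 -E.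
by move=> k ki; rewrite hornerM hornerLp eq_sym (negbTE ki) mul0r.
Qed.

End Eigen.


Section DerEigen.
Variable (S : comUnitRingType) (n : nat) (A : 'M[S]_n.+1) (x : 'I_n.+1 -> S).
Hypothesis Hchar : char_poly A = \prod_(i < n.+1) ('X - (x i)%:P).
Hypothesis Hunit : forall i j, i != j -> (x i - x j) \is a GRing.unit.
Variable D : S -> S.
Hypothesis DD : forall a b, D (a + b) = D a + D b.
Hypothesis DM : forall a b, D (a * b) = D a * b + a * D b.

Local Notation P := (Pm A x).
Let APm' := APm Hchar.
Let PmA' := PmA Hchar.
Let PmPm' := PmPm Hchar Hunit.
Let sumPm' := sumPm Hchar Hunit.
Let trPm' := trPm Hchar Hunit.
Local Notation DA := (map_mx D A).

Lemma mulmx1' m (M : 'M[S]_(m, n.+1)) : M = M *m \sum_k P k.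
Proof. by rewrite sumPm' ?mulmx1. Qed.
Lemma mul1mx' m (M : 'M[S]_(n.+1, m)) : M = (\sum_k P k) *m M.
Proof. by rewrite sumPm' ?mul1mx. Qed.

Lemma ML i : D (x i) = \tr (P i *m DA).
Proof.
have h := congr1 (map_mx D) (APm' i).
rewrite Dmx_mul // Dmx_scale // in h.
have h2 := congr1 (mulmx (P i)) h.
rewrite !mulmxDr !mulmxA PmA' -!scalemxAr -scalemxAl in h2.
rewrite PmPm' eqxx in h2.
move/addIr: h2 => h2.
have := congr1 mxtrace h2; rewrite mxtraceZ trPm' mulr1 => <-.
by rewrite mxtrace_mulC mulmxA PmPm' eqxx.
Qed.

Lemma DPm i : map_mx D (P i) =
  \sum_(m | m != i) (x i - x m)^-1 *: (P m *m DA *m P i + P i *m DA *m P m).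
Proof.
set Q := map_mx D (P i).
have ha : DA *m P i + A *m Q = D (x i) *: P i + x i *: Q.
  by rewrite -Dmx_scale // -Dmx_mul // APm'.
have hb : Q *m A + P i *m DA = D (x i) *: P i + x i *: Q.
  by rewrite -Dmx_scale // -Dmx_mul // PmA'.
have hc : Q *m P i + P i *m Q = Q.
  by rewrite -Dmx_mul // PmPm' eqxx.
have HL m : m != i -> P m *m Q = (x i - x m)^-1 *: (P m *m DA *m P i).
  move=> mi; have := congr1 (mulmx (P m)) ha.
  rewrite !mulmxDr !mulmxA PmA' -!scalemxAr PmPm'.
  rewrite (negbTE mi) scaler0 add0r -scalemxAl => h.
  have -> : P m *m DA *m P i = (x i - x m) *: (P m *m Q) by rewrite scalerBl -h addrK.
  by rewrite scalerA mulVr ?scale1r // Hunit // eq_sym.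
have HR m : m != i -> Q *m P m = (x i - x m)^-1 *: (P i *m DA *m P m).
  move=> mi; have := congr1 (mulmx^~ (P m)) hb.
  rewrite !mulmxDl -!mulmxA APm' -!scalemxAl -!scalemxAr.
  rewrite PmPm' eq_sym (negbTE mi) scaler0 add0r mulmxA => h.
  have -> : P i *m DA *m P m = (x i - x m) *: (Q *m P m) by rewrite scalerBl -h addrAC subrr add0r.
  by rewrite scalerA mulVr ?scale1r // Hunit // eq_sym.
have HC : P i *m Q *m P i = 0.
  have := congr1 (fun M => P i *m M *m P i) hc.
  rewrite /= mulmxDr mulmxDl !mulmxA PmPm' eqxx.
  rewrite -!mulmxA PmPm' eqxx !mulmxA.
  by move/eqP; rewrite -subr_eq0 addrK => /eqP.
rewrite {1}[Q]mul1mx' mulmx_suml (bigD1 i) //= [P i *m Q]mulmx1' mulmx_sumr.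
rewrite (bigD1 i) //= HC add0r addrC -big_split /=.
apply: eq_bigr => m mi; rewrite HL // -[P i *m Q *m P m]mulmxA HR // -scalemxAr scalerDr.
by rewrite !mulmxA PmPm' eqxx.
Qed.

End DerEigen.


Section Vieta.
Variable (T : comUnitRingType) (n : nat) (x : 'I_n.+1 -> T) (j : 'I_n.+1).

Let F k : {poly T} := if k == j then 0 else - (x k)%:P.
Let G k : {poly T} := if k == j then 1 else 'X.

Lemma card_notin (J : {set 'I_n.+1}) : j \notin J ->
  #|[pred k | (k \notin J) && (k != j)]| = (n - #|J|)%N.
Proof.
move=> jJ.
have h1 : (#|J| + #|~: J|)%N = n.+1 by rewrite cardsC card_ord.
have h2 : ~: J = j |: [set k | (k \notin J) && (k != j)].
  apply/setP => k; rewrite !inE; case: (k =P j) => [->|_] //=; by rewrite ?jJ ?andbT.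
have h3 : #|~: J| = #|[set k | (k \notin J) && (k != j)]|.+1.
  by rewrite h2 cardsU1 inE eqxx andbF.
have -> : #|[pred k | (k \notin J) && (k != j)]| = #|[set k | (k \notin J) && (k != j)]|.
  by apply: eq_card => k; rewrite inE.
move: h1; rewrite h3; lia.
Qed.

Lemma term_notin (J : {set 'I_n.+1}) : j \notin J ->
  \prod_k (if k \in J then F k else G k) =
  ((-1) ^+ #|J| * \prod_(k in J) x k) *: 'X^(n - #|J|).
Proof.
move=> jJ; rewrite (bigID (mem J)) /=.
have -> : \prod_(k | k \in J) (if k \in J then F k else G k) = \prod_(k in J) - (x k)%:P.
  apply: eq_bigr => k kJ; rewrite kJ /F; case: eqP => // kj.
  by move: jJ; rewrite -kj kJ.
have -> : \prod_(k | k \notin J) (if k \in J then F k else G k) = 'X^(n - #|J|).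
  rewrite (bigD1 j) //= (negbTE jJ) /G eqxx mul1r.
  rewrite -(card_notin jJ) -prodr_const; apply: eq_big => k; first by [].
  by move=> /andP[kJ kj]; rewrite (negbTE kJ) (negbTE kj).
rewrite prodrN -mul_polyC rmorphM rmorphXn rmorphN rmorph1 rmorph_prod.
by [].
Qed.

Lemma Lp_expand :
  \prod_(k < n.+1 | k != j) ('X - (x k)%:P) =
  \sum_(r < n.+1) ((-1) ^+ r * esym_omit x j r) *: 'X^(n - r).
Proof.
have -> : \prod_(k < n.+1 | k != j) ('X - (x k)%:P) = \prod_k (F k + G k).
  rewrite [RHS](bigD1 j) //= /F /G eqxx add0r mul1r.
  by apply: eq_bigr => k kj; rewrite (negbTE kj) addrC.
rewrite bigA_distr /= (bigID (fun J : {set _} => j \in J)) /= big1 ?add0r; last first.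
  move=> J jJ; rewrite (bigD1 j) //= jJ /F eqxx mul0r //.
under eq_bigr => J jJ do rewrite (term_notin jJ).
under [RHS]eq_bigr => r _ do rewrite /esym_omit mulr_sumr scaler_suml.
rewrite [RHS](exchange_big_dep (fun J : {set 'I_n.+1} => j \notin J)) /=; last first.
  by move=> r J _ /andP[].
apply: eq_bigr => J jJ.
have cJ : (#|J| < n.+1)%N.
  have : J \subset [set~ j] by apply/subsetP => k kJ; rewrite !inE; apply: contraNneq jJ => <-.
  by move/subset_leq_card; rewrite cardsC1 card_ord.
rewrite [RHS](bigD1 (Ordinal cJ)) /=; last by rewrite eqxx jJ.
rewrite [X in _ = _ + X]big1 ?addr0 //.
move=> r /andP[/andP[/eqP Er _] rne]; move: rne.
by rewrite eqE /= Er eqxx.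
Qed.

End Vieta.


Lemma mul_mx_deltaE (T : comNzRingType) m p q (M : 'M[T]_(m, p)) (l : 'I_p) (k : 'I_q) a b :
  (M *m delta_mx l k) a b = M a l * (b == k)%:R.
Proof.
rewrite mxE (bigD1 l) //= big1 ?addr0; first by rewrite mxE eqxx.
by move=> c cl; rewrite mxE (negbTE cl) mulr0.
Qed.

Lemma mul_delta_mxE (T : comNzRingType) m p q (M : 'M[T]_(p, q)) (l : 'I_m) (k : 'I_p) a b :
  (delta_mx l k *m M) a b = (a == l)%:R * M k b.
Proof.
rewrite mxE (bigD1 k) //= big1 ?addr0; first by rewrite mxE eqxx andbT.
by move=> c ck; rewrite mxE (negbTE ck) andbF mul0r.
Qed.

Lemma mx11E (T : comNzRingType) (X Y : 'M[T]_1) : (X *m Y) 0 0 = X 0 0 * Y 0 0.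
Proof. by rewrite mxE big_ord1. Qed.

Lemma tr11 (T : comNzRingType) (X : 'M[T]_1) : \tr X = X 0 0.
Proof. by rewrite /mxtrace big_ord1. Qed.

Lemma mxE_sub (T : zmodType) m p (M N : 'M[T]_(m, p)) a b : (M - N) a b = M a b - N a b.
Proof. by rewrite !mxE. Qed.
Lemma mxE_add (T : zmodType) m p (M N : 'M[T]_(m, p)) a b : (M + N) a b = M a b + N a b.
Proof. by rewrite !mxE. Qed.
Lemma mxE_scale (T : nzRingType) m p (c : T) (M : 'M[T]_(m, p)) a b : (c *: M) a b = c * M a b.
Proof. by rewrite !mxE. Qed.
Lemma mxE_opp (T : zmodType) m p (M : 'M[T]_(m, p)) a b : (- M) a b = - M a b.
Proof. by rewrite !mxE. Qed.
Lemma mxE_map (T : Type) (U : Type) (f : T -> U) m p (M : 'M[T]_(m, p)) a b : map_mx f M a b = f (M a b).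
Proof. by rewrite !mxE. Qed.

Section Poisson.
Variable (R : realType) (S : comUnitAlgType (Cplx R)) (br : S -> S -> S).
Hypothesis Hpb : poisson_bracket br.

Lemma brDl h f g : br (f + g) h = br f h + br g h.
Proof. by case: Hpb => H1 _ _ _ _; have := H1 1 f g h; rewrite !scale1r. Qed.
Lemma brDr h f g : br h (f + g) = br h f + br h g.
Proof. by case: Hpb => _ H2 _ _ _; have := H2 1 f g h; rewrite !scale1r. Qed.
Lemma brN f g : br f g = - br g f.
Proof. by case: Hpb. Qed.
Lemma brMl h f g : br (f * g) h = br f h * g + f * br g h.
Proof. by case: Hpb => _ _ _ H _; rewrite H addrC mulrC. Qed.
Lemma brMr h f g : br h (f * g) = br h f * g + f * br h g.
Proof. by rewrite [br h (f * g)]brN brMl opprD [br h f]brN [br h g]brN mulNr mulrN. Qed.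

Variable n : nat.
Variables (E : 'I_n.+1 -> 'I_n.+1 -> S) (Q P : 'I_n.+1 -> S) (x : 'I_n.+1 -> S).
Hypothesis HEE : forall i j k l : 'I_n.+1,
      br (E i j) (E k l) = (j == k)%:R * E i l - (l == i)%:R * E k j.
Hypothesis HEQ : forall i j k : 'I_n.+1, br (E i j) (Q k) = (j == k)%:R * Q i.
Hypothesis HEP : forall i j k : 'I_n.+1, br (E i j) (P k) = 0.
Hypothesis HQQ : forall k l : 'I_n.+1, br (Q k) (Q l) = 0.
Hypothesis HPP : forall k l : 'I_n.+1, br (P k) (P l) = 0.
Hypothesis HQP : forall k l : 'I_n.+1, br (Q k) (P l) = 0.
Hypothesis Hchar : char_poly (Amat E) = \prod_(i < n.+1) ('X - (x i)%:P).
Hypothesis Hunit : forall i j : 'I_n.+1, i != j -> (x i - x j) \is a GRing.unit.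

Local Notation A := (Amat E).
Local Notation Pj := (Pm A x).
Definition prow : 'rV[S]_n.+1 := \row_c P c.
Definition qcol : 'cV[S]_n.+1 := \col_c Q c.
Definition bform (M : 'M[S]_n.+1) := (prow *m M *m qcol) 0 0.
Definition zz i := bform (Pj i).
Definition ww i := Pj i *m qcol.

Let APm' := APm Hchar.
Let PmA' := PmA Hchar.
Let PmPm' := PmPm Hchar Hunit.
Let ML' := ML Hchar Hunit.
Let DPm' := DPm Hchar Hunit.

Lemma AE a b : A a b = E a b. Proof. by rewrite mxE. Qed.

Lemma bform_sum (I : Type) (s : seq I) (p : pred I) (F : I -> 'M[S]_n.+1) :
  bform (\sum_(m <- s | p m) F m) = \sum_(m <- s | p m) bform (F m).
Proof. by rewrite /bform mulmx_sumr mulmx_suml summxE. Qed.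
Lemma bform_scale c M : bform (c *: M) = c * bform M.
Proof. by rewrite /bform -scalemxAr -scalemxAl mxE. Qed.
Lemma bform_add M N : bform (M + N) = bform M + bform N.
Proof. by rewrite /bform mulmxDr mulmxDl mxE. Qed.
Lemma bform_sub M N : bform (M - N) = bform M - bform N.
Proof. by rewrite /bform mulmxBr mulmxBl mxE_sub. Qed.

Lemma Dz (D : S -> S) (DD : forall a b, D (a + b) = D a + D b)
  (DM : forall a b, D (a * b) = D a * b + a * D b) (HDp : forall c, D (P c) = 0) i :
  D (zz i) = \sum_(m | m != i) (x i - x m)^-1 *
     (bform (Pj m *m map_mx D A *m Pj i) + bform (Pj i *m map_mx D A *m Pj m))
   + (prow *m Pj i *m map_mx D qcol) 0 0.
Proof.
have -> : D (zz i) = map_mx D (prow *m Pj i *m qcol) 0 0 by rewrite mxE.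
rewrite !(Dmx_mul DD DM) (DPm' DD DM) mxE.
have -> : map_mx D prow = 0 by apply/matrixP => a b; rewrite !mxE HDp.
rewrite mul0mx add0r; congr (_ + _).
by rewrite -/(bform _) bform_sum; apply: eq_bigr => m _; rewrite bform_scale bform_add.
Qed.

Lemma xE i k l : br (x i) (E k l) = 0.
Proof.
rewrite (ML' (brDl (E k l)) (brMl (E k l))).
have -> : map_mx (br^~ (E k l)) A = A *m delta_mx l k - delta_mx l k *m A.
  apply/matrixP => a b; rewrite mxE_map mxE_sub mul_mx_deltaE mul_delta_mxE !AE HEE.
  by rewrite [E a l * _]mulrC [a == l]eq_sym.
rewrite mulmxBr raddfB /= mulmxA PmA' -scalemxAl mxtraceZ.
by rewrite [\tr (Pj i *m (_ *m A))]mxtrace_mulC -mulmxA APm' -scalemxAr mxtraceZ mxtrace_mulC subrr.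
Qed.

Lemma xP i c : br (x i) (P c) = 0.
Proof.
rewrite (ML' (brDl (P c)) (brMl (P c))).
have -> : map_mx (br^~ (P c)) A = 0 by apply/matrixP => a b; rewrite !mxE HEP.
by rewrite mulmx0 mxtrace0.
Qed.

Lemma xQ i c : br (x i) (Q c) = ww i c 0.
Proof.
rewrite (ML' (brDl (Q c)) (brMl (Q c))).
have -> : map_mx (br^~ (Q c)) A = qcol *m delta_mx 0 c.
  by apply/matrixP => a b; rewrite mxE_map mul_mx_deltaE AE !mxE HEQ mulrC eq_sym.
by rewrite mulmxA mxtrace_mulC tr11 mul_delta_mxE eqxx mul1r.
Qed.


Lemma DA_x i : map_mx (br (x i)) A = 0.
Proof. by apply/matrixP => a b; rewrite !mxE xE. Qed.

Lemma xx i j : br (x i) (x j) = 0.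
Proof.
by rewrite (ML' (brDr (x i)) (brMr (x i))) DA_x mulmx0 mxtrace0.
Qed.

Lemma xz i j : br (x i) (zz j) = (i == j)%:R * zz j.
Proof.
rewrite (Dz (brDr (x i)) (brMr (x i)) (xP i)) DA_x.
rewrite big1 ?add0r; last first.
  by move=> m _; rewrite !mulmx0 !mul0mx /bform mulmx0 mul0mx mxE addr0 mulr0.
have -> : map_mx (br (x i)) qcol = ww i by apply/matrixP => a b; rewrite mxE_map /qcol mxE xQ (ord1 b).
rewrite /ww mulmxA -(mulmxA prow) PmPm' eq_sym; case: eqP => [->|_].
  by rewrite mul1r.
by rewrite mulmx0 mul0mx mxE mul0r.
Qed.

Lemma sumPm_neq j : \sum_(m | m != j) Pj m = 1%:M - Pj j.
Proof. by rewrite -(sumPm Hchar Hunit) [in RHS](bigD1 j) //= addrC addrK. Qed.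

Lemma Ez k l j : br (E k l) (zz j) = P l * ww j k 0.
Proof.
set N : 'M[S]_n.+1 := delta_mx l k.
rewrite (Dz (brDr (E k l)) (brMr (E k l)) (HEP k l)).
have -> : map_mx (br (E k l)) A = N *m A - A *m N.
  apply/matrixP => a b; rewrite mxE_map mxE_sub mul_mx_deltaE mul_delta_mxE !AE HEE.
  by rewrite [E a l * _]mulrC [a == l]eq_sym.
have -> : map_mx (br (E k l)) qcol = N *m qcol.
  by apply/matrixP => a b; rewrite mxE_map mul_delta_mxE !mxE HEQ eq_sym.
have H1 m : m != j -> (x j - x m)^-1 * (bform (Pj m *m (N *m A - A *m N) *m Pj j)
    + bform (Pj j *m (N *m A - A *m N) *m Pj m))
    = bform (Pj m *m N *m Pj j) - bform (Pj j *m N *m Pj m).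
  move=> mj.
  have E1 (M1 M2 : 'M[S]_n.+1) : M1 *m (N *m A - A *m N) *m M2
      = M1 *m N *m (A *m M2) - (M1 *m A) *m N *m M2.
    by rewrite mulmxBr mulmxBl !mulmxA.
  rewrite !E1 !APm' !PmA' -!scalemxAr -!scalemxAl !bform_sub !bform_scale.
  set X := bform (Pj m *m N *m Pj j); set Y := bform (Pj j *m N *m Pj m).
  have -> : x j * X - x m * X + (x m * Y - x j * Y) = (x j - x m) * (X - Y) by ring.
  by rewrite mulKr // Hunit // eq_sym.
rewrite (eq_bigr _ H1) sumrB -!bform_sum -mulmx_suml -mulmxA -mulmx_sumr.
rewrite -mulmx_suml !sumPm_neq mulmxBl mul1mx mulmxBr mulmx1 !bform_sub.
have -> : (prow *m (Pj j *m (N *m qcol))) 0 0 = bform (Pj j *m N) by rewrite /bform !mulmxA.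
rewrite mulmxBl bform_sub.
set a := bform (N *m _); set b := bform (_ *m _ *m Pj j); set c := bform (Pj j *m N).
have -> : a - b - (c - b) + c = a by ring.
rewrite /a /bform -mulmxA mxE (bigD1 l) //= big1 ?addr0.
  by rewrite -mulmxA mul_delta_mxE eqxx mul1r mxE.
by move=> b0 bl; rewrite -mulmxA mul_delta_mxE (negbTE bl) mul0r mulr0.
Qed.


Lemma brP_E c a b : br (P c) (E a b) = 0.
Proof. by rewrite brN HEP oppr0. Qed.
Lemma brP_Q c a : br (P c) (Q a) = 0.
Proof. by rewrite brN HQP oppr0. Qed.
Lemma brP_Q' c a : br (P a) (Q c) = 0.
Proof. by rewrite brN HQP oppr0. Qed.

Lemma Pz c j : br (P c) (zz j) = 0.
Proof.
rewrite (Dz (brDr (P c)) (brMr (P c)) (HPP c)).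
have -> : map_mx (br (P c)) A = 0 by apply/matrixP => a b; rewrite !mxE brP_E.
have -> : map_mx (br (P c)) qcol = 0 by apply/matrixP => a b; rewrite !mxE brP_Q.
rewrite big1 ?add0r; first by rewrite mulmx0 mxE.
by move=> m _; rewrite !mulmx0 !mul0mx /bform mulmx0 mul0mx mxE addr0 mulr0.
Qed.

Lemma DA_Q c : map_mx (br^~ (Q c)) A = qcol *m delta_mx 0 c.
Proof. by apply/matrixP => a b; rewrite mxE_map mul_mx_deltaE AE !mxE HEQ mulrC eq_sym. Qed.

Lemma bform_q a b c : bform (Pj a *m (qcol *m delta_mx 0 c) *m Pj b) = zz a * ww b c 0.
Proof.
rewrite /bform /zz /bform /ww !mulmxA -(mulmxA _ (delta_mx 0 c)) -(mulmxA _ _ qcol).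
by rewrite mx11E -[delta_mx 0 c *m Pj b *m qcol]mulmxA mul_delta_mxE eqxx mul1r.
Qed.

Lemma zQ j c : br (zz j) (Q c) =
  (\sum_(m | m != j) (x j - x m)^-1 *: (zz m *: ww j + zz j *: ww m)) c 0.
Proof.
rewrite (Dz (brDl (Q c)) (brMl (Q c)) (brP_Q' c)) DA_Q.
have -> : map_mx (br^~ (Q c)) qcol = 0 by apply/matrixP => a b; rewrite !mxE HQQ.
rewrite mulmx0 [(0 : 'M[S]_1) 0 0]mxE addr0 summxE; apply: eq_bigr => m _.
by rewrite !bform_q !mxE.
Qed.

Lemma DA_z j : map_mx (br^~ (zz j)) A = ww j *m prow.
Proof.
apply/matrixP => a b; rewrite mxE_map AE Ez [RHS]mxE big_ord1 [prow _ _]mxE mulrC.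
by [].
Qed.

Lemma Dq_z j : map_mx (br^~ (zz j)) qcol =
  - \sum_(m | m != j) (x j - x m)^-1 *: (zz m *: ww j + zz j *: ww m).
Proof.
apply/matrixP => a b; rewrite mxE_map [qcol a b]mxE brN zQ [RHS]mxE.
by rewrite (ord1 b).
Qed.


Lemma bform_Pw i k : (prow *m Pj i *m ww k) 0 0 = (i == k)%:R * zz i.
Proof.
rewrite /ww mulmxA -(mulmxA prow) PmPm'; case: eqP => [->|_]; first by rewrite mul1r.
by rewrite mulmx0 mul0mx mxE mul0r.
Qed.

Lemma bform_w a b c : bform (Pj a *m (ww b *m prow) *m Pj c) = (if a == b then zz b else 0) * zz c.
Proof.
rewrite /bform /ww !mulmxA -!(mulmxA (prow *m Pj a *m Pj b *m qcol)) mx11E.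
rewrite -(mulmxA prow (Pj a)) PmPm'; case: (a =P b) => [<-|_] //.
by rewrite mulmx0 mul0mx mxE.
Qed.

Lemma bform_sumw i j (p : pred 'I_n.+1) (c a b : 'I_n.+1 -> S) :
  (prow *m Pj i *m \sum_(m | p m) c m *: (a m *: ww j + b m *: ww m)) 0 0 =
  \sum_(m | p m) c m * (a m * ((i == j)%:R * zz i) + b m * ((i == m)%:R * zz i)).
Proof.
rewrite mulmx_sumr summxE; apply: eq_bigr => m _.
rewrite -scalemxAr mulmxDr -!scalemxAr mxE_scale mxE_add.
by rewrite !mxE_scale !bform_Pw.
Qed.

Lemma zzzz i j : i != j -> br (zz i) (zz j) = (x i - x j)^-1 * (zz i * zz j) *+ 2.
Proof.
move=> ij; have ji : j != i by rewrite eq_sym.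
rewrite (Dz (brDl (zz j)) (brMl (zz j)) (fun c => Pz c j)) DA_z Dq_z.
rewrite mulmxN mxE_opp bform_sumw.
rewrite (bigD1 j) 1?eq_sym //= big1 ?addr0; last first.
  by move=> m /andP[_ mj]; rewrite !bform_w (negbTE mj) ?(negbTE ij) ?(negbTE ji) !mul0r addr0 mulr0.
rewrite (bigD1 i) //= big1 ?addr0; last first.
  move=> m /andP[_ mi]; have im : i != m by rewrite eq_sym.
  by rewrite ?(negbTE ij) ?(negbTE ji) ?(negbTE mi) ?(negbTE im) !mul0r !mulr0 addr0 mulr0.
rewrite !bform_w !eqxx ?(negbTE ij) ?(negbTE ji) -[x j - x i]opprB invrN /=.
rewrite mulr0n mulr1n; ring.
Qed.


Lemma bformE M : bform M = \sum_a \sum_b P a * M a b * Q b.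
Proof.
rewrite /bform mxE; under eq_bigr => b _ do rewrite mxE mulr_suml.
rewrite exchange_big; apply: eq_bigr => a _; apply: eq_bigr => b _.
by rewrite !mxE.
Qed.

Lemma yE j : yfun E Q P x j = uu x j * zz j.
Proof.
rewrite /yfun.
have -> : (uu x j * zz j) = bform (horner_mx A (Lp x j)).
  rewrite -/(Lm A x j) /zz -bform_scale PmE scalerA mulrV ?scale1r //.
  exact: uu_unit.
rewrite /Lp Lp_expand raddf_sum /= bform_sum; apply: eq_bigr => r _.
rewrite horner_mxZ rmorphXn /= horner_mx_X bform_scale /bfun -bformE.
by [].
Qed.


Lemma x_uu k j : br (x k) (uu x j) = 0.
Proof.
rewrite /uu (Dprod0 (brMr (x k))) // => l _.
by rewrite (DerB (brDr (x k))) !xx subrr.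
Qed.

Lemma uu_uu i j : br (uu x i) (uu x j) = 0.
Proof.
rewrite {1}/uu (Dprod0 (brMl _)) // => l _.
by rewrite (DerB (brDl _)) !x_uu subrr.
Qed.

Lemma part3 i j : br (x i) (yfun E Q P x j) = (i == j)%:R * yfun E Q P x j.
Proof. by rewrite !yE brMr x_uu xz mul0r add0r mulrCA. Qed.

Definition up i j := \prod_(k < n.+1 | (k != i) && (k != j)) (x i - x k).

Lemma uu_split i j : i != j -> uu x i = (x i - x j) * up i j.
Proof. by move=> ij; rewrite /uu (bigD1 j) 1?eq_sym. Qed.

Lemma up_z i j : i != j -> br (up i j) (zz j) = 0.
Proof.
move=> ij; rewrite /up (Dprod0 (brMl _)) // => k /andP[ki kj].
by rewrite (DerB (brDl _)) !xz (negbTE ij) (negbTE kj) mul0r subrr.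
Qed.

Lemma uu_z i j : i != j -> br (uu x i) (zz j) = - (zz j * up i j).
Proof.
move=> ij; rewrite (uu_split ij) brMl up_z // mulr0 addr0 (DerB (brDl _)) !xz.
by rewrite eqxx (negbTE ij) mul0r sub0r mul1r mulNr.
Qed.

Lemma zzzz' i j : i != j -> (x i - x j) * br (zz i) (zz j) = zz i * zz j *+ 2.
Proof.
by move=> ij; rewrite zzzz // -mulrnAr mulrA mulrV ?mul1r // Hunit.
Qed.

Lemma part2 i j : br (yfun E Q P x i) (yfun E Q P x j) = 0.
Proof.
have [<-|ij] := eqVneq i j.
  set f := yfun E Q P x i.
  have h : br f f *+ 2 = 0 by rewrite mulr2n {1}(brN f f) addNr.
  move: h; rewrite -scaler_nat => /eqP; rewrite scaler_eq0 pnatr_eq0 /=.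
  by move/eqP.
have ji : j != i by rewrite eq_sym.
rewrite !yE brMl !brMr uu_uu uu_z // [br (zz i) (uu x j)]brN uu_z //.
have -> : uu x j * br (zz i) (zz j) = - (up j i * ((x i - x j) * br (zz i) (zz j))).
  by rewrite (uu_split ji); ring.
rewrite zzzz' // (uu_split ij) (uu_split ji); ring.
Qed.

End Poisson.

Unset Implicit Arguments.

Theorem proposition3p7 (R : realType) (d : nat) (S : comUnitAlgType (Cplx R))
  (br : S -> S -> S) (E : 'I_d -> 'I_d -> S) (Q P : 'I_d -> S)
  (x : 'I_d -> S) :
  poisson_bracket br ->
  (forall i j k l : 'I_d,
      br (E i j) (E k l) = (j == k)%:R * E i l - (l == i)%:R * E k j) ->
  (forall i j k : 'I_d, br (E i j) (Q k) = (j == k)%:R * Q i) ->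
  (forall i j k : 'I_d, br (E i j) (P k) = 0) ->
  (forall k l : 'I_d, br (Q k) (Q l) = 0) ->
  (forall k l : 'I_d, br (P k) (P l) = 0) ->
  (forall k l : 'I_d, br (Q k) (P l) = 0) ->
  char_poly (Amat E) = \prod_(i < d) ('X - (x i)%:P) ->
  (forall i j : 'I_d, i != j -> (x i - x j) \is a GRing.unit) ->
  forall i j : 'I_d,
    [/\ br (x i) (x j) = 0,
        br (yfun E Q P x i) (yfun E Q P x j) = 0
      & br (x i) (yfun E Q P x j) = (i == j)%:R * yfun E Q P x j].
Proof.
case: d E Q P x => [|n] E Q P x Hpb HEE HEQ HEP HQQ HPP HQP Hchar Hunit i j.
  by case: i.
split.
- by eapply xx; eassumption.
- by eapply part2; eassumption.
- by eapply part3; eassumption.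
Qed.
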